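(* Let $(\Omega(\mathcal{A}),d)$ be a differential calculus on a complex algebra $\mathcal{A}$ with $\mathcal{E}=\Omega^1(\mathcal{A})$ a finitely generated projective right $\mathcal{A}$-module satisfying: (1) $\mathcal{E}=\mathcal{Z}(\mathcal{E})\otimes_{\mathcal{Z}(\mathcal{A})}\mathcal{A}$; (2) $\mathcal{E}\otimes_{\mathcal{A}}\mathcal{E}=\ker(\wedge)\oplus\mathcal{F}$ with $\mathcal{F}$ a right submodule and $Q=\wedge|_{\mathcal{F}}:\mathcal{F}\to\Omega^2(\mathcal{A})$ a right $\mathcal{A}$-linear isomorphism; (3) $\sigma(\omega\otimes_{\mathcal{A}}\eta)=\eta\otimes_{\mathcal{A}}\omega$ for all $\omega,\eta\in\mathcal{Z}(\mathcal{E})$. Then: (a) the map $\sigma$, and hence $P_{\rm sym}$, is $\mathcal{A}$-$\mathcal{A}$-bilinear; (b) the map $Q:\mathcal{F}\to\Omega^2(\mathcal{A})$ is an $\mathcal{A}$-$\mathcal{A}$-bilinear isomorphism.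
   Context: A differential calculus: $\Omega(\mathcal{A})=\oplus_{j\ge0}\Omega^j(\mathcal{A})$, $\Omega^0=\mathcal{A}$, bimodules $\Omega^j$, an $\mathcal{A}$-bimodule product $\wedge$ adding degrees, $d$ of degree one with $d^2=0$ and the graded Leibniz rule, $\Omega^j$ right-spanned by $da_0\wedge\cdots\wedge da_{j-1}$. $\wedge:\mathcal{E}\otimes_{\mathcal{A}}\mathcal{E}\to\Omega^2(\mathcal{A})$ is the induced product. $P_{\rm sym}$ is the idempotent on $\mathcal{E}\otimes_{\mathcal{A}}\mathcal{E}$ with image $\ker\wedge$ and kernel $\mathcal{F}$, and $\sigma=2P_{\rm sym}-1$. For a bimodule $\mathcal{M}$, $\mathcal{Z}(\mathcal{M})=\{m:am=ma\ \forall a\in\mathcal{A}\}$; $\mathcal{Z}(\mathcal{A})$ is the center of $\mathcal{A}$. Condition (1) means the multiplication map $\mathcal{Z}(\mathcal{E})\otimes_{\mathcal{Z}(\mathcal{A})}\mathcal{A}\to\mathcal{E}$ is an isomorphism. *)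

(* Defs.v *)
From mathcomp Require Import all_boot all_algebra.
From mathcomp Require Import complex.
From mathcomp Require Import reals.

Set Implicit Arguments.
Unset Strict Implicit.
Unset Printing Implicit Defensive.
Import GRing.Theory.
Local Open Scope ring_scope.

Definition additive_map (M N : zmodType) (f : M -> N) : Prop :=
  forall x y, f (x + y) = f x + f y.

Definition is_bimodule (A : nzRingType) (M : zmodType)
    (l : A -> M -> M) (r : M -> A -> M) : Prop :=
  (forall a x y, l a (x + y) = l a x + l a y) /\
  (forall a b x, l (a + b) x = l a x + l b x) /\
  (forall a b x, l (a * b) x = l a (l b x)) /\
  (forall x, l 1 x = x) /\
  (forall a x y, r (x + y) a = r x a + r y a) /\
  (forall a b x, r x (a + b) = r x a + r x b) /\
  (forall a b x, r x (a * b) = r (r x a) b) /\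
  (forall x, r x 1 = x) /\
  (forall a b x, l a (r x b) = r (l a x) b).

(* M (a right A-module) is finitely generated projective: a direct summand
   (via right A-linear maps iota, pi with pi \o iota = id) of the free right
   module A^n = ('I_n -> A) for some n *)
Definition fg_projective_right (A : nzRingType) (M : zmodType)
    (r : M -> A -> M) : Prop :=
  exists (n : nat) (iota : M -> 'I_n -> A) (pi : ('I_n -> A) -> M),
    (forall x y i, iota (x + y) i = iota x i + iota y i) /\
    (forall x a i, iota (r x a) i = iota x i * a) /\
    (forall u v, pi (fun i => u i + v i) = pi u + pi v) /\
    (forall u a, pi (fun i => u i * a) = r (pi u) a) /\
    (forall x, pi (iota x) = x).

Definition central_elt (A : nzRingType) (M : zmodType)
    (l : A -> M -> M) (r : M -> A -> M) (x : M) : Prop :=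
  forall a, l a x = r x a.

Definition central_alg (A : nzRingType) (c : A) : Prop :=
  forall a, a * c = c * a.

Definition balanced_biadditive (A : nzRingType) (S : A -> Prop)
    (M1 M2 N : zmodType) (D1 : M1 -> Prop)
    (r1 : M1 -> A -> M1) (l2 : A -> M2 -> M2) (f : M1 -> M2 -> N) : Prop :=
  (forall x y y', D1 x -> f x (y + y') = f x y + f x y') /\
  (forall x x' y, D1 x -> D1 x' -> f (x + x') y = f x y + f x' y) /\
  (forall x s y, D1 x -> S s -> f (r1 x s) y = f x (l2 s y)).

(* (T, tens) is the tensor product over the scalars S of the right S-module
   D1 (a subset of M1) with the left S-module M2: tens is balanced
   biadditive, T is generated by the pure tensors, and every balanced
   biadditive map factors through an additive map on T (the factorisation
   is unique because T is generated by pure tensors). *)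
Definition is_tensor_product (A : nzRingType) (S : A -> Prop)
    (M1 M2 T : zmodType) (D1 : M1 -> Prop)
    (r1 : M1 -> A -> M1) (l2 : A -> M2 -> M2) (tens : M1 -> M2 -> T) : Prop :=
  balanced_biadditive S D1 r1 l2 tens /\
  (forall t : T, exists s : seq (M1 * M2),
      (forall p, p \in s -> D1 p.1) /\ t = \sum_(p <- s) tens p.1 p.2) /\
  (forall (N : zmodType) (f : M1 -> M2 -> N),
      balanced_biadditive S D1 r1 l2 f ->
      exists g : T -> N, additive_map g /\
         forall x y, D1 x -> g (tens x y) = f x y).

(* A differential calculus on the complex algebra A, truncated to degrees
   <= 2 (the statement only involves Omega^0 = A, Omega^1 = E,
   Omega^2 = W): d0 : A -> E, d1 : E -> W, wedge : E x E -> W. *)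
Definition diff_calculus_le2 (R : realType) (A : algType R[i])
    (E W : zmodType)
    (lE : A -> E -> E) (rE : E -> A -> E)
    (lW : A -> W -> W) (rW : W -> A -> W)
    (d0 : A -> E) (d1 : E -> W) (wedge : E -> E -> W) : Prop :=
  is_bimodule lE rE /\ is_bimodule lW rW /\
  (forall a b, d0 (a + b) = d0 a + d0 b) /\
  (forall (c : R[i]) a, d0 (c *: a) = lE (c%:A) (d0 a)) /\
  (forall w v, d1 (w + v) = d1 w + d1 v) /\
  (forall (c : R[i]) w, d1 (lE (c%:A) w) = lW (c%:A) (d1 w)) /\
  (forall a, d1 (d0 a) = 0) /\
  (forall a b, d0 (a * b) = rE (d0 a) b + lE a (d0 b)) /\
  (forall a w, d1 (lE a w) = wedge (d0 a) w + lW a (d1 w)) /\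
  (forall w a, d1 (rE w a) = rW (d1 w) a - wedge w (d0 a)) /\
  (forall w w' v, wedge (w + w') v = wedge w v + wedge w' v) /\
  (forall w v v', wedge w (v + v') = wedge w v + wedge w v') /\
  (forall w a v, wedge (rE w a) v = wedge w (lE a v)) /\
  (forall a w v, lW a (wedge w v) = wedge (lE a w) v) /\
  (forall w v a, rW (wedge w v) a = wedge w (rE v a)) /\
  (forall w : E, exists s : seq (A * A),
      w = \sum_(p <- s) rE (d0 p.1) p.2) /\
  (forall w : W, exists s : seq (A * A * A),
      w = \sum_(p <- s) rW (wedge (d0 p.1.1) (d0 p.1.2)) p.2).

Definition sigma_of (T : zmodType) (Psym : T -> T) (t : T) : T :=
  Psym t *+ 2 - t.

(* Main.v *)
Require Import Defs.
From mathcomp Require Import all_boot all_algebra.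
From mathcomp Require Import complex.
From mathcomp Require Import reals.
Import GRing.Theory Num.Theory.
Local Open Scope ring_scope.


Lemma am0 {M N : zmodType} {f : M -> N} : additive_map f -> f 0 = 0.
Proof. move=> Hf; have h := Hf 0 0; rewrite addr0 in h.
by apply: (addrI (f 0)); rewrite -h addr0. Qed.

Lemma amN {M N : zmodType} {f : M -> N} : additive_map f -> forall x, f (- x) = - f x.
Proof. move=> Hf x; apply: (addrI (f x)); by rewrite -Hf !subrr am0. Qed.

Lemma amB {M N : zmodType} {f : M -> N} : additive_map f -> forall x y, f (x - y) = f x - f y.
Proof. by move=> Hf x y; rewrite Hf amN. Qed.

Lemma big_closed {V : zmodType} {I : eqType} {P : V -> Prop} {f : I -> V}
  {Q : I -> Prop} {s : seq I} : P 0 -> (forall u v, P u -> P v -> P (u + v)) ->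
  (forall i, Q i -> P (f i)) -> (forall i, i \in s -> Q i) -> P (\sum_(i <- s) f i).
Proof.
move=> P0 PD Pf; elim: s => [|x s IH] Hs; first by rewrite big_nil.
rewrite big_cons; apply: PD; first by apply: Pf; apply: Hs; rewrite mem_head.
by apply: IH => i Hi; apply: Hs; rewrite in_cons Hi orbT.
Qed.

Theorem proposition6p3
  (R : realType) (A : algType R[i])
  (* Omega^1 = E, Omega^2 = W, T = E (x)_A E, TZ = Z(E) (x)_{Z(A)} A *)
  (E W T TZ : zmodType)
  (lE : A -> E -> E) (rE : E -> A -> E)
  (lW : A -> W -> W) (rW : W -> A -> W)
  (d0 : A -> E) (d1 : E -> W) (wedge : E -> E -> W)
  (lT : A -> T -> T) (rT : T -> A -> T) (tens : E -> E -> T)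
  (wT : T -> W)
  (tz : E -> A -> TZ) (mu : TZ -> E)
  (F : T -> Prop) (Psym : T -> T)
  (* differential calculus *)
  (Hcalc : diff_calculus_le2 lE rE lW rW d0 d1 wedge)
  (* E is a finitely generated projective right A-module *)
  (Hproj : fg_projective_right rE)
  (* T = E (x)_A E as an A-bimodule *)
  (Htens : is_tensor_product (fun _ : A => True) (fun _ : E => True) rE lE tens)
  (HTbimod : is_bimodule lT rT)
  (HlT : forall a x y, lT a (tens x y) = tens (lE a x) y)
  (HrT : forall x y a, rT (tens x y) a = tens x (rE y a))
  (* the induced product wedge : E (x)_A E -> Omega^2 *)
  (HwT : additive_map wT /\ forall x y, wT (tens x y) = wedge x y)
  (* (1): the multiplication map Z(E) (x)_{Z(A)} A -> E is an isomorphism *)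
  (Htz : is_tensor_product (@central_alg A) (central_elt lE rE) rE
           (fun a b : A => a * b) tz)
  (Hmu : additive_map mu /\
         (forall z a, central_elt lE rE z -> mu (tz z a) = rE z a) /\
         bijective mu)
  (* (2): F is a right submodule, E (x)_A E = ker(wedge) (+) F, and
     Q = wedge|_F : F -> Omega^2 is a right A-linear isomorphism *)
  (HF : F 0 /\ (forall s t, F s -> F t -> F (s - t)) /\
        (forall t a, F t -> F (rT t a)))
  (Hdirect : (forall t, exists k f, wT k = 0 /\ F f /\ t = k + f) /\
             (forall t, wT t = 0 -> F t -> t = 0))
  (HQ : (forall t a, F t -> wT (rT t a) = rW (wT t) a) /\
        (forall s t, F s -> F t -> wT s = wT t -> s = t) /\
        (forall w, exists t, F t /\ wT t = w))
  (* Psym : the idempotent with image ker(wedge) and kernel F *)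
  (HPsym : forall t, wT (Psym t) = 0 /\ F (t - Psym t))
  (* (3): sigma (w (x) v) = v (x) w for w, v in Z(E) *)
  (Hsym : forall w v, central_elt lE rE w -> central_elt lE rE v ->
            sigma_of Psym (tens w v) = tens v w) :
  (* (a) sigma and Psym are A-A-bilinear *)
  ((forall s t, sigma_of Psym (s + t) = sigma_of Psym s + sigma_of Psym t) /\
   (forall a t, sigma_of Psym (lT a t) = lT a (sigma_of Psym t)) /\
   (forall t a, sigma_of Psym (rT t a) = rT (sigma_of Psym t) a) /\
   (forall s t, Psym (s + t) = Psym s + Psym t) /\
   (forall a t, Psym (lT a t) = lT a (Psym t)) /\
   (forall t a, Psym (rT t a) = rT (Psym t) a)) /\
  (* (b) F is a sub-bimodule and Q = wedge|_F : F -> Omega^2 is an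
     A-A-bilinear isomorphism *)
  ((forall t a, F t -> F (lT a t)) /\
   (forall s t, F s -> F t -> wT (s + t) = wT s + wT t) /\
   (forall t a, F t -> wT (lT a t) = lW a (wT t)) /\
   (forall t a, F t -> wT (rT t a) = rW (wT t) a) /\
   (forall s t, F s -> F t -> wT s = wT t -> s = t) /\
   (forall w, exists t, F t /\ wT t = w)).
Proof.
Proof.
case: Hcalc => HE [HW [_ [_ [_ [_ [_ [_ [_ [_ [Hwa [Hwb [Hwbal [Hwl [Hwr _]]]]]]]]]]]]]].
case: HE => lEa [lEd [lEm [lE1 [rEa [rEd [rEm [rE1 lrE]]]]]]].
case: HW => lWa [lWd [lWm [lW1 [rWa [rWd [rWm [rW1 lrW]]]]]]].
case: HTbimod => lTa [lTd [lTm [lT1 [rTa [rTd [rTm [rT1 lrT]]]]]]].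
case: Htens => [[tensr [tensl tensbal]] [Tgen _]].
case: HwT => HwTa HwTt.
case: Hmu => Hmua [Hmutz [g gK Kg]].
case: Htz => [_ [TZgen _]].
case: HF => F0 [FB FrT].
case: Hdirect => _ Huniq.
case: HQ => HQr [HQi HQs].
have FN : forall t, F t -> F (- t) by move=> t Ft; rewrite -sub0r; apply: FB.
have FD : forall s t, F s -> F t -> F (s + t).
  by move=> s t Fs Ft; rewrite -[t]opprK; apply: FB => //; apply: FN.
have amrT : forall a, additive_map (fun x => rT x a) by move=> a x y; apply: rTa.
have amlT : forall a, additive_map (lT a) by move=> a x y; apply: lTa.
have amrW : forall a, additive_map (fun x => rW x a) by move=> a x y; apply: rWa.
have amlW : forall a, additive_map (lW a) by move=> a x y; apply: lWa.
have amtr : forall x, additive_map (tens x) by move=> x y y'; apply: tensr.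
have amtl : forall y, additive_map (tens^~ y) by move=> y x x'; apply: tensl.
have Hdec : forall y, exists s : seq (E * A),
    (forall p, p \in s -> central_elt lE rE p.1) /\ y = \sum_(p <- s) rE p.1 p.2.
  move=> y; have [s [Hs Hy]] := TZgen (g y); exists s; split => //.
  rewrite -[y]Kg Hy (big_morph mu Hmua (am0 Hmua)).
  by apply: eq_big_seq => p /Hs Hp; rewrite Hmutz.
have Tind : forall P : T -> Prop, P 0 -> (forall u v, P u -> P v -> P (u + v)) ->
    (forall x y, P (tens x y)) -> forall t, P t.
  move=> P P0 PD Pt t; have [s [_ ->]] := Tgen t.
  by apply: (big_closed (Q := fun _ => True)) => // p _; apply: Pt.
have wTr : forall t a, wT (rT t a) = rW (wT t) a.
  move=> t a; move: t; apply: Tind.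
  - by rewrite (am0 (amrT a)) (am0 HwTa) (am0 (amrW a)).
  - by move=> u v Hu Hv; rewrite rTa !HwTa Hu Hv rWa.
  - by move=> x y; rewrite HrT !HwTt Hwr.
have wTl : forall t a, wT (lT a t) = lW a (wT t).
  move=> t a; move: t; apply: Tind.
  - by rewrite (am0 (amlT a)) (am0 HwTa) (am0 (amlW a)).
  - by move=> u v Hu Hv; rewrite lTa !HwTa Hu Hv lWa.
  - by move=> x y; rewrite HlT !HwTt Hwl.
have decomp : forall t k, wT k = 0 -> F (t - k) -> Psym t = k.
  move=> t k Hk Ftk; have [H1 H2] := HPsym t.
  apply/eqP; rewrite -subr_eq0; apply/eqP; apply: Huniq.
    by rewrite (amB HwTa) H1 Hk subrr.
  have -> : Psym t - k = (t - k) - (t - Psym t).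
    by rewrite opprB [RHS]addrC [RHS]addrA subrK.
  by apply: FB.
have PD : forall s t, Psym (s + t) = Psym s + Psym t.
  move=> s t; apply: decomp; first by rewrite HwTa !(HPsym _).1 addr0.
  by rewrite opprD addrACA; apply: FD; apply: (HPsym _).2.
have PR : forall t a, Psym (rT t a) = rT (Psym t) a.
  move=> t a; apply: decomp; first by rewrite wTr (HPsym t).1 (am0 (amrW a)).
  by rewrite -(amB (amrT a)); apply: FrT; apply: (HPsym t).2.
have amP : additive_map Psym by move=> ??; apply: PD.
pose Sg := sigma_of Psym.
have SD : forall s t, Sg (s + t) = Sg s + Sg t.
  by move=> s t; rewrite /Sg /sigma_of PD mulrnDl opprD addrACA.
have amS : additive_map Sg by move=> ??; apply: SD.
have SR : forall t a, Sg (rT t a) = rT (Sg t) a.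
  move=> t a; rewrite /Sg /sigma_of PR (amB (amrT a)); congr (_ - _).
  by rewrite !mulr2n rTa.
have key : forall z z' a c, central_elt lE rE z -> central_elt lE rE z' ->
    lT a (rT (tens z z') c) = rT (tens z z') (a * c).
  move=> z z' a c Hz Hz'.
  by rewrite lrT HlT Hz tensbal // Hz' -HrT rTm.
have SL : forall a t, Sg (lT a t) = lT a (Sg t).
  move=> a; apply: Tind.
  - by rewrite (am0 (amlT a)) (am0 amS) (am0 (amlT a)).
  - by move=> u v Hu Hv; rewrite lTa SD Hu Hv SD lTa.
  move=> x y; have [s [Hs ->]] := Hdec x.
  rewrite (big_morph (tens^~ y) (amtl y) (am0 (amtl y))).
  apply: (big_closed (P := fun u => Sg (lT a u) = lT a (Sg u)) (Q := fun p => central_elt lE rE p.1)) => //.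
  - by rewrite (am0 (amlT a)) (am0 amS) (am0 (amlT a)).
  - by move=> u v Hu Hv; rewrite lTa SD Hu Hv SD lTa.
  move=> [z b] /= Hz; rewrite tensbal //.
  have [s' [Hs' ->]] := Hdec (lE b y).
  rewrite (big_morph (tens z) (amtr z) (am0 (amtr z))).
  apply: (big_closed (P := fun u => Sg (lT a u) = lT a (Sg u)) (Q := fun p => central_elt lE rE p.1)) => //.
  - by rewrite (am0 (amlT a)) (am0 amS) (am0 (amlT a)).
  - by move=> u v Hu Hv; rewrite lTa SD Hu Hv SD lTa.
  move=> [z' c] /= Hz'; rewrite -HrT key // SR /Sg Hsym // -key //.
  by rewrite -Hsym // -SR.
have h2 : ((2 : R[i])^-1 + 2^-1 = 1).
  by rewrite -mulr2n -[_ *+ 2]mulr_natr mulVf // pnatr_eq0.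
have cancel2 : forall x y : T, x *+ 2 = y *+ 2 -> x = y.
  have e : forall x : T, x = rT (x *+ 2) ((2 : R[i])^-1)%:A.
    move=> x; by rewrite mulr2n rTa -rTd -scalerDl h2 scale1r rT1.
  by move=> x y Hxy; rewrite [x]e Hxy -e.
have PL : forall a t, Psym (lT a t) = lT a (Psym t).
  move=> a t; apply: cancel2.
  have e : forall u, Psym u *+ 2 = Sg u + u by move=> u; rewrite /Sg /sigma_of subrK.
  by rewrite e SL -lTa -e !mulr2n lTa.
have FP0 : forall t, F t -> Psym t = 0.
  by move=> t Ft; apply: decomp; rewrite ?(am0 HwTa) // subr0.
split.
  split; first exact: SD. split; first exact: SL. split; first exact: SR.
  split; first exact: PD. split; first exact: PL. exact: PR.
split.
  move=> t a Ft; have := (HPsym (lT a t)).2.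
  by rewrite PL FP0 // (am0 (amlT a)) subr0.
split; first by move=> s t _ _; apply: HwTa.
split; first by move=> t a _; apply: wTl.
split; first exact: HQr. split; first exact: HQi. exact: HQs.
Qed.
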